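(* Let $\mathcal{K}$ be a family of kernels on $X\times X$, let $\epsilon,\gamma>0$, and let $\mathbf{P}=(P_1,\dots,P_{2n})$ be any probability distributions over $X\times Y$. Then there exists $\tilde{\mathcal{K}}\subset\mathcal{K}$ with $|\tilde{\mathcal{K}}|\leq N_{(D,2n)}(\mathcal{K},\epsilon\gamma/16)$ such that for every $K\in\mathcal{K}$ there exists $\tilde K\in\tilde{\mathcal{K}}$ with \[ er^\gamma_{P_i}(\mathcal{F}_K)+\epsilon/8\geq er^{\gamma/2}_{P_i}(\mathcal{F}_{\tilde{K}})\geq er_{P_i}(\mathcal{F}_K)-\epsilon/8\quad \text{for all } i=1,\dots,2n. \]
   Context: $Y=\{-1,1\}$. A kernel is $K(x,x')=\langle\phi(x),\phi(x')\rangle$ for a map $\phi$ into a Hilbert space; $\mathcal{F}_K=\{x\mapsto\langle w,\phi(x)\rangle:\|w\|\le1\}$. $\llbracket\cdot\rrbracket$ is the indicator. For a distribution $P$ on $X\times Y$: $er_P(\mathcal{F}_K)=\inf_{h\in\mathcal{F}_K}\mathbb{E}_{(x,y)\sim P}\llbracket h(x)y<0\rrbracket$ and $er^\gamma_P(\mathcal{F}_K)=\inf_{h\in\mathcal{F}_K}\mathbb{E}_{(x,y)\sim P}\llbracket h(x)y<\gamma\rrbracket$. With $P_X$ the marginal on $X$, $D_P(K,\tilde K)=\max\{\max_{h\in\mathcal{F}_K}\min_{h'\in\mathcal{F}_{\tilde K}}\mathbb{E}_{x\sim P_X}|h(x)-h'(x)|,\ \max_{h'\in\mathcal{F}_{\tilde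 K}}\min_{h\in\mathcal{F}_K}\mathbb{E}_{x\sim P_X}|h(x)-h'(x)|\}$; for a tuple $\mathbf{Q}=(Q_1,\dots,Q_r)$, $D_{\mathbf{Q}}=\max_i D_{Q_i}$. An $\epsilon$-cover of $\mathcal{K}$ w.r.t. $D_{\mathbf{Q}}$ is a subset $\tilde{\mathcal{K}}\subset\mathcal{K}$ with every $K$ having $\tilde K\in\tilde{\mathcal{K}}$, $D_{\mathbf{Q}}(K,\tilde K)<\epsilon$; $N_{D_{\mathbf{Q}}}(\mathcal{K},\epsilon)$ is its minimal size and $N_{(D,r)}(\mathcal{K},\epsilon)=\max_{(Q_1,\dots,Q_r)}N_{D_{\mathbf{Q}}}(\mathcal{K},\epsilon)$. *)

(* Defs.v *)
From HB Require Import structures.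
From mathcomp Require Import all_boot all_order all_algebra.
From mathcomp Require Import finmap all_classical all_reals all_analysis.
Set Implicit Arguments. Unset Strict Implicit. Unset Printing Implicit Defensive.
Import Order.TTheory GRing.Theory Num.Theory.
Local Open Scope classical_set_scope.
Local Open Scope ring_scope.

(* The kernel is K(x,x') = <phi x, phi x'>.  As a standing regularity
   assumption every function x |-> <w, phi x> is measurable (needed so
   that the expectations/probabilities below are meaningful). *)
Record fkernel (R : realType) d (X : measurableType d) := Kernel {
  kspace : Type;
  kzero : kspace;
  kadd : kspace -> kspace -> kspace;
  kopp : kspace -> kspace;
  kscale : R -> kspace -> kspace;
  kaddA : forall u v w, kadd u (kadd v w) = kadd (kadd u v) w;
  kaddC : forall u v, kadd u v = kadd v u;
  kadd0 : forall u, kadd kzero u = u;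
  kaddN : forall u, kadd (kopp u) u = kzero;
  kscaleA : forall a b u, kscale a (kscale b u) = kscale (a * b) u;
  kscale1 : forall u, kscale 1 u = u;
  kscaleDr : forall a u v, kscale a (kadd u v) = kadd (kscale a u) (kscale a v);
  kscaleDl : forall a b u, kscale (a + b) u = kadd (kscale a u) (kscale b u);
  kinner : kspace -> kspace -> R;
  kinner_sym : forall u v, kinner u v = kinner v u;
  kinner_linear : forall a u v w,
    kinner (kadd (kscale a u) v) w = a * kinner u w + kinner v w;
  kinner_ge0 : forall u, 0 <= kinner u u;
  kinner_eq0 : forall u, kinner u u = 0 -> u = kzero;
  kcomplete : forall u : nat -> kspace,
    (forall e : R, 0 < e -> exists N, forall m k, (N <= m)%N -> (N <= k)%N ->
        Num.sqrt (kinner (kadd (u m) (kopp (u k))) (kadd (u m) (kopp (u k)))) < e) ->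
    exists l, forall e : R, 0 < e -> exists N, forall m, (N <= m)%N ->
        Num.sqrt (kinner (kadd (u m) (kopp l)) (kadd (u m) (kopp l))) < e;
  kphi : X -> kspace;
  kphi_meas : forall w, measurable_fun [set: X] (fun x => kinner w (kphi x))
}.

Section Defs.
Context (R : realType) d (X : measurableType d).
Local Notation XY := (X * bool)%type.

Definition kfun (K : fkernel R X) (x x' : X) : R := kinner (kphi K x) (kphi K x').

Definition FK (K : fkernel R X) : set (X -> R) :=
  [set h | exists w : kspace K,
     Num.sqrt (kinner w w) <= 1 /\ h = (fun x => kinner w (kphi K x))].

Definition yval (b : bool) : R := if b then 1 else -1.

Local Open Scope ereal_scope.

Definition er (P : probability XY R) (F : set (X -> R)) : \bar R :=
  ereal_inf [set P [set z | (h z.1 * yval z.2 < 0)%R] | h in F].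

Definition er_margin (gamma : R) (P : probability XY R) (F : set (X -> R)) : \bar R :=
  ereal_inf [set P [set z | (h z.1 * yval z.2 < gamma)%R] | h in F].

Definition marginal (P : probability XY R) : set X -> \bar R :=
  pushforward P fst.

Definition DP (P : probability XY R) (K K' : fkernel R X) : \bar R :=
  let dist := fun h h' : X -> R =>
    \int[marginal P]_x (`|h x - h' x|)%:E in
  maxe (ereal_sup [set ereal_inf [set dist h h' | h' in FK K'] | h in FK K])
       (ereal_sup [set ereal_inf [set dist h h' | h in FK K] | h' in FK K']).

Definition DQ r (Q : 'I_r -> probability XY R) (K K' : fkernel R X) : \bar R :=
  \big[maxe/-oo]_(i < r) DP (Q i) K K'.

Definition is_cover r (Q : 'I_r -> probability XY R) (Kfam Kt : set (fkernel R X))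
  (eps : R) : Prop :=
  Kt `<=` Kfam /\
  forall K, Kfam K -> exists2 K', Kt K' & DQ Q K K' < eps%:E.

(* cardinality as an extended real: the k with A in bijection with {0..k-1},
   or +oo (= inf of the empty set) if A is infinite *)
Definition ecard (T : Type) (A : set T) : \bar R :=
  ereal_inf [set (k%:R)%:E | k in [set k : nat | (A #= `I_k)%card]].

Definition covnum r (Q : 'I_r -> probability XY R) (Kfam : set (fkernel R X))
  (eps : R) : \bar R :=
  ereal_inf [set ecard Kt | Kt in [set Kt | is_cover Q Kfam Kt eps]].

Definition covnum_r (r : nat) (Kfam : set (fkernel R X)) (eps : R) : \bar R :=
  ereal_sup [set covnum Q Kfam eps | Q in [set: 'I_r -> probability XY R]].

End Defs.

(* Main.v *)
Require Import Defs.
From HB Require Import structures.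
From mathcomp Require Import all_boot all_order all_algebra.
From mathcomp Require Import all_classical all_reals all_analysis.
From mathcomp Require Import ring lra.
Import Order.TTheory GRing.Theory Num.Theory.
Local Open Scope classical_set_scope.
Local Open Scope ring_scope.
Section Helpers.
Context (R : realType) (d : measure_display) (X : measurableType d).
Implicit Types (P : probability (X * bool)%type R).

Lemma mset_lt (f : X * bool -> R) (a : R) : measurable_fun setT f ->
  measurable [set z | f z < a].
Proof.
move=> mf; rewrite -[X in measurable X]setTI.
have -> : [set z | f z < a] = f @^-1` `]-oo, a[.
  by apply/seteqP; split => z /=; rewrite in_itv.
exact: mf.
Qed.

Lemma mset_le (f : X * bool -> R) (a : R) : measurable_fun setT f ->
  measurable [set z | a <= f z].
Proof.
move=> mf; rewrite -[X in measurable X]setTI.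
have -> : [set z | a <= f z] = f @^-1` `[a, +oo[.
  by apply/seteqP; split => z /=; rewrite in_itv /= andbT.
exact: mf.
Qed.

Lemma myval : measurable_fun [set: bool] (@yval R).
Proof. by []. Qed.

Lemma mS (h : X -> R) (a : R) : measurable_fun setT h ->
  measurable [set z : X * bool | h z.1 * yval R z.2 < a].
Proof.
move=> mh; apply: (@mset_lt (fun z => h z.1 * yval R z.2)).
apply: measurable_realfun.measurable_funM.
  exact: measurableT_comp mh measurable_fst.
exact: measurableT_comp myval measurable_snd.
Qed.

Lemma markovP P (f g : X -> R) (a : R) : measurable_fun setT f ->
  measurable_fun setT g -> 0 < a ->
  (a%:E * P [set z | (a <= `|f z.1 - g z.1|)%R] <=
    \int[marginal P]_x (`|f x - g x|)%:E)%E.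
Proof.
move=> mf mg a0.
have mfg : measurable_fun setT (fun z : X * bool => f z.1 - g z.1).
  apply: measurable_realfun.measurable_funB.
    exact: measurableT_comp mf measurable_fst.
  exact: measurableT_comp mg measurable_fst.
have mfg' : measurable_fun setT (fun x => f x - g x) by exact: measurable_realfun.measurable_funB.
have := @le_integral_comp_abse _ _ R P setT measurableT
   (fun z => (f z.1 - g z.1)%:E) a id (@measurable_id _ _ setT) (fun r h => h)
   (fun x y _ _ h => h).
move=> /(_ _ a0) H.
have -> : [set z : X * bool | (a <= `|f z.1 - g z.1|)%R] =
   setT `&` [set z | (a%:E <= `|(f z.1 - g z.1)%:E|)%E].
  by apply/seteqP; split => z /=; rewrite lee_fin //; move=> [].
apply: (le_trans (H _)).
  by apply/measurable_realfun.measurable_EFinP.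
rewrite /marginal ge0_integral_pushforward //.
- by apply/measurable_realfun.measurable_EFinP; exact: measurableT_comp.
Qed.
Lemma incl_real (f g : X -> R) (s t c : R) (z : X * bool) :
  c <= t - s -> f z.1 * yval R z.2 < s -> ~ (g z.1 * yval R z.2 < t) ->
  c <= `|g z.1 - f z.1|.
Proof.
move=> hc h1 /negP; rewrite -leNgt => h2.
have n1 := ler_norm (g z.1 - f z.1).
have n2 := ler_norm (f z.1 - g z.1).
rewrite distrC in n2.
move: h1 h2; case: z.2 => /=; rewrite ?mulr1 ?mulrN1 => h1 h2; lra.
Qed.

Lemma mul_lt_bound (p : \bar R) (c e : R) : 0 < c -> (0 <= p)%E ->
  (c%:E * p < (c * e)%:E)%E -> (p <= e%:E)%E.
Proof.
move=> c0; case: p => [r| |] //= _.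
  by rewrite -EFinM !lte_fin lter_pM2l // => /ltW; rewrite lee_fin.
by rewrite mulry gtr0_sg // mul1e ltNge leey.
Qed.

Lemma approx P (f g : X -> R) (s t c e : R) :
  measurable_fun setT f -> measurable_fun setT g -> 0 < c -> c <= t - s ->
  (\int[marginal P]_x (`|g x - f x|)%:E < (c * e)%:E)%E ->
  (P [set z | (f z.1 * yval R z.2 < s)%R] <=
     P [set z | (g z.1 * yval R z.2 < t)%R] + e%:E)%E.
Proof.
move=> mf mg c0 hc hint.
set A := [set z | _ < s]; set B := [set z | _ < t].
set C := [set z : X * bool | (c <= `|g z.1 - f z.1|)%R].
have mC : measurable C.
  apply: (@mset_le (fun z => `|g z.1 - f z.1|)).
  apply: measurableT_comp => //.
  apply: measurable_realfun.measurable_funB.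
    exact: measurableT_comp mg measurable_fst.
  exact: measurableT_comp mf measurable_fst.
have mA : measurable A by exact: mS.
have mB : measurable B by exact: mS.
have sA : A `<=` B `|` C.
  move=> z Az; have [Bz|nBz] := pselect (B z); first by left.
  by right; rewrite /A /B /C in Az nBz *; exact: (@incl_real f g s t c z hc Az nBz).
apply: (le_trans (le_measure P _ _ sA)); rewrite ?inE //; first exact: measurableU.
apply: (le_trans (measureU2 P mB mC)).
rewrite leeD2l //.
apply: (@mul_lt_bound _ c) => //.
apply: le_lt_trans hint.
exact: markovP.
Qed.
Lemma FK_meas (K : fkernel R X) h : FK K h -> measurable_fun setT h.
Proof. by case=> w [_ ->]; exact: kphi_meas. Qed.
Arguments FK_meas {K h}.

Lemma core P (K K' : fkernel R X) (gamma eps : R) :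
  0 < gamma -> 0 < eps -> (DP P K K' < (eps * gamma / 16)%:E)%E ->
  (er_margin gamma P (FK K) + (eps / 8)%:E >=
           er_margin (gamma / 2) P (FK K'))%E /\
  (er_margin (gamma / 2) P (FK K') >= er P (FK K) - (eps / 8)%:E)%E.
Proof.
move=> g0 e0 H; rewrite /DP /= gt_max in H; move/andP: H => [H1 H2].
have ceq : eps * gamma / 16 = gamma / 2 * (eps / 8) by field.
rewrite ceq in H1 H2.
have hA : forall h, FK K h -> exists2 h', FK K' h' &
    (\int[marginal P]_x (`|h x - h' x|)%:E < (gamma / 2 * (eps / 8))%:E)%E.
  move=> h Fh.
  have : (ereal_inf [set \int[marginal P]_x (`|h x - h' x|)%:E | h' in FK K']
      < (gamma / 2 * (eps / 8))%:E)%E.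
    by apply: le_lt_trans H1; apply: ereal_sup_ubound; exists h.
  by move=> /ereal_inf_lt [_ [h' Fh' <-] hl]; exists h'.
have hB : forall h', FK K' h' -> exists2 h, FK K h &
    (\int[marginal P]_x (`|h' x - h x|)%:E < (gamma / 2 * (eps / 8))%:E)%E.
  move=> h' Fh'.
  have : (ereal_inf [set \int[marginal P]_x (`|h x - h' x|)%:E | h in FK K]
      < (gamma / 2 * (eps / 8))%:E)%E.
    by apply: le_lt_trans H2; apply: ereal_sup_ubound; exists h'.
  move=> /ereal_inf_lt [_ [h Fh <-] hl]; exists h => //.
  by under eq_integral do rewrite distrC.
have g2 : 0 < gamma / 2 by lra.
split.
- rewrite -leeBlDr //; apply: le_ereal_inf_tmp => _ [h Fh <-].
  have [h' Fh' hl] := hA h Fh.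
  rewrite leeBlDr //.
  apply: le_trans; first by apply: ereal_inf_lbound; exists h'.
  apply: (@approx P h' h (gamma / 2) gamma (gamma / 2) (eps / 8) (FK_meas Fh') (FK_meas Fh) g2 _ hl); lra.
-   apply: le_ereal_inf_tmp => _ [h' Fh' <-].
  have [h Fh hl] := hB h' Fh'.
  rewrite leeBlDr //.
  apply: le_trans; first by apply: ereal_inf_lbound; exists h.
  apply: (@approx P h h' 0 (gamma / 2) (gamma / 2) (eps / 8) (FK_meas Fh) (FK_meas Fh') g2 _ hl); lra.
Qed.
Lemma inf_attain (E : set (\bar R)) :
  (forall x, E x -> x = +oo%E \/ exists k : nat, x = (k%:R)%:E) ->
  ereal_inf E = +oo%E \/ exists2 x, E x & ereal_inf E = x.
Proof.
move=> hE.
case: (pselect (exists k : nat, E (k%:R)%:E)) => [ex|nex].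
- right.
  have exb : exists k, (fun k : nat => `[< E (k%:R)%:E >]) k.
    by case: ex => k Ek; exists k; exact/asboolP.
  case: (ex_minnP exb) => m /asboolP Em mmin; exists (m%:R)%:E => //.
  apply/le_anti/andP; split; first exact: ereal_inf_lbound.
  apply: le_ereal_inf_tmp => x Ex; case: (hE x Ex) => [->|[k xk]].
    exact: leey.
  by rewrite xk lee_fin ler_nat; apply: mmin => /=; apply/asboolP; rewrite -xk.
- left; apply/eqP; rewrite eq_le leey /=; apply: le_ereal_inf_tmp => x Ex.
  case: (hE x Ex) => [->//|[k xk]]; exfalso; apply: nex; exists k.
  by rewrite -xk.
Qed.

Lemma ecard_form (T : Type) (A : set T) :
  ecard R A = +oo%E \/ exists k : nat, ecard R A = (k%:R)%:E.
Proof.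
rewrite /ecard.
have hE : forall x : \bar R, [set (k%:R)%:E | k in [set k : nat | (A #= `I_k)%card]] x ->
    x = +oo%E \/ exists k : nat, x = (k%:R)%:E.
  by move=> _ [k _ <-]; right; exists k.
case: (inf_attain _ hE).
- by left.
- by move=> [_ [k _ <-] ->]; right; exists k.
Qed.
End Helpers.

Theorem lemma5 (R : realType) (d : measure_display) (X : measurableType d)
  (Kfam : set (fkernel R X)) (eps gamma : R) (n : nat)
  (heps : 0 < eps) (hgamma : 0 < gamma)
  (P : 'I_(2 * n) -> probability (X * bool)%type R) :
  exists Kt : set (fkernel R X),
    Kt `<=` Kfam /\
    (ecard R Kt <= covnum_r (2 * n) Kfam (eps * gamma / 16))%E /\
    forall K, Kfam K -> exists2 K', Kt K' &
      forall i : 'I_(2 * n),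
        (er_margin gamma (P i) (FK K) + (eps / 8)%:E >=
           er_margin (gamma / 2) (P i) (FK K'))%E /\
        (er_margin (gamma / 2) (P i) (FK K') >= er (P i) (FK K) - (eps / 8)%:E)%E.
Proof.
set c := eps * gamma / 16.
have c0 : 0 < c by rewrite /c; apply: divr_gt0 => //; apply: mulr_gt0.
have DPle : forall i K K', (DQ P K K' < c%:E)%E -> (DP (P i) K K' < c%:E)%E.
  move=> i K K' H; apply: le_lt_trans H.
  exact: (@le_bigmax _ _ _ -oo%E (fun i => DP (P i) K K') i).
have DPrefl : forall i K, (DP (P i) K K < c%:E)%E.
  move=> i K; apply: (@le_lt_trans _ _ 0%E); last by rewrite lte_fin.
  rewrite /DP /= ge_max; apply/andP; split; apply: ge_ereal_sup => _ [h Fh <-];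
    (apply: le_trans; first by apply: ereal_inf_lbound; exists h).
  1,2: rewrite /marginal ge0_integral_pushforward //; [
    by under eq_integral do rewrite /= subrr normr0; rewrite integral0 |
    by apply/measurable_realfun.measurable_EFinP; apply: measurableT_comp => //;
       apply: measurable_realfun.measurable_funB; exact: FK_meas Fh].
have hcov : (covnum P Kfam c <= covnum_r (2 * n) Kfam c)%E.
  by apply: ereal_sup_ubound; exists P.
have hE : forall x : \bar R, [set ecard R Kt | Kt in [set Kt | is_cover P Kfam Kt c]] x ->
    x = +oo%E \/ exists k : nat, x = (k%:R)%:E.
  move=> _ [Kt _ <-]; exact: ecard_form.
case: (@inf_attain R _ hE).
- move=> hinf; exists Kfam; split => //; split.
    move: hcov; rewrite /covnum hinf leye_eq => /eqP ->; exact: leey.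
  move=> K KK; exists K => // i.
  exact: core (DPrefl i K).
- move=> [_ [Kt [sK covK] <-] hinf]; exists Kt; split => //; split.
    by move: hcov; rewrite /covnum hinf.
  move=> K KK; have [K' K'K HQ] := covK K KK; exists K' => // i.
  exact: core (DPle i K K' HQ).
Qed.
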